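(* For a positive integer $m$, let $M_1(m)$ be the number of ordinary partitions of $m$ in which the largest part occurs exactly once and every other part size that occurs, occurs exactly twice. Let $M_2(m)$ be the number of partitions of $m$ with $n$ copies of $n$ in which, with parts in ascending lexicographic order, the weighted difference between each part and the preceding one is $0$, and the smallest part is of the form $j_j$. Then $M_1(m)=M_2(m)$.
   Context: $M=\{m_i: 1\le i\le m\}$; a partition with $n$ copies of $n$ is a finite multiset of elements of $M$ whose values (first entries) sum to the number partitioned. Lexicographic order: $m_i>n_j$ iff $m>n$, or $m=n$ and $i>j$. Weighted difference $((m_i-n_j))=m-n-i-j$. *)

(* Defs.v *)
From mathcomp Require Import all_boot all_algebra.
Set Implicit Arguments. Unset Strict Implicit. Unset Printing Implicit Defensive.
Import GRing.Theory Num.Theory.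

Fixpoint seqs_upto (X : Type) (A : seq X) (n : nat) : seq (seq X) :=
  if n is n'.+1 then [::] :: [seq x :: s | x <- A, s <- seqs_upto A n']
  else [:: [::]].

Definition is_partition (m : nat) (s : seq nat) : bool :=
  [&& all (fun x => 0 < x) s, sorted geq s & sumn s == m].

Definition M1_cond (s : seq nat) : bool :=
  let l := foldr maxn 0 s in
  (count_mem l s == 1) && all (fun x => (x != l) ==> (count_mem x s == 2)) s.

(* Every ordinary partition of m (as nonincreasing list) lies in this list exactly once. *)
Definition M1 (m : nat) : nat :=
  count (fun s => is_partition m s && M1_cond s) (seqs_upto (iota 1 m) m).

(* a part m_i is the pair (m, i) with 1 <= i <= m *)
Definition ncopy_part (p : nat * nat) : bool := (1 <= p.2 <= p.1).

Definition lexle (a b : nat * nat) : bool :=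
  (a.1 < b.1) || ((a.1 == b.1) && (a.2 <= b.2)).

Definition wdiff (a b : nat * nat) : int :=
  a.1%:Z - b.1%:Z - a.2%:Z - b.2%:Z.

(* partition of m with n copies of n, listed in ascending lexicographic order
   (the canonical representative of the multiset) *)
Definition is_ncopy_partition (m : nat) (s : seq (nat * nat)) : bool :=
  [&& all ncopy_part s, sorted lexle s & sumn (map fst s) == m].

Definition M2_cond (s : seq (nat * nat)) : bool :=
  sorted (fun a b => wdiff b a == 0) s &&
  (if s is p :: _ then p.1 == p.2 else false).

Definition ncopy_parts (m : nat) : seq (nat * nat) :=
  [seq (v, i) | v <- iota 1 m, i <- iota 1 v].

Definition M2 (m : nat) : nat :=
  count (fun s => is_ncopy_partition m s && M2_cond s) (seqs_upto (ncopy_parts m) m).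

(* Main.v *)
Require Import Defs.
From mathcomp Require Import all_boot all_algebra.
From mathcomp Require Import zify.

Fixpoint dbl (s : seq nat) : seq nat := if s is x :: t then x :: x :: dbl t else [::].
Definition m1of (D : seq nat) := if D is x :: t then x :: dbl t else [::].
Fixpoint undbl (s : seq nat) : seq nat :=
  match s with x :: _ :: t => x :: undbl t | [:: x] => [:: x] | [::] => [::] end.
Definition unm1 (s : seq nat) := if s is x :: t then x :: undbl t else [::].
Fixpoint m2aux (q : nat) (P : seq nat) : seq (nat * nat) :=
  if P is p :: t then (q + p, p - q) :: m2aux p t else [::].
Definition m2of P := m2aux 0 P.
Definition hh (a : nat * nat) := (a.1 + a.2)./2.

Lemma wdiffE (a b : nat * nat) : (wdiff b a == 0%R) = (b.1 == a.1 + b.2 + a.2).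
Proof. rewrite /wdiff; apply/eqP/eqP => H; lia. Qed.

Lemma undbl_dbl t : undbl (dbl t) = t.
Proof. by elim: t => //= x t ->. Qed.

Lemma mem_dbl t x : (x \in dbl t) = (x \in t).
Proof. elim: t => //= y t IH; rewrite !inE IH; by case: (x == y). Qed.

Lemma count_dbl t x : count_mem x (dbl t) = (count_mem x t).*2.
Proof. elim: t => //= y t ->; rewrite -addnn; lia. Qed.

Lemma sumn_dbl t : sumn (dbl t) = (sumn t).*2.
Proof. elim: t => //= y t ->; rewrite -!addnn; lia. Qed.

Lemma count_bij (T U : eqType) (l1 : seq T) (l2 : seq U) (p : pred T) (q : pred U)
  (f : T -> U) (g : U -> T) :
  uniq l1 -> uniq l2 ->
  (forall x, x \in l1 -> p x -> [/\ f x \in l2, q (f x) & g (f x) = x]) ->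
  (forall y, y \in l2 -> q y -> [/\ g y \in l1, p (g y) & f (g y) = y]) ->
  count p l1 = count q l2.
Proof.
move=> u1 u2 H1 H2; rewrite -!size_filter -(size_map f).
apply: perm_size; apply: uniq_perm.
- rewrite map_inj_in_uniq ?filter_uniq // => x y; rewrite !mem_filter.
  move=> /andP[px xl] /andP[py yl] E.
  by have [_ _ <-] := H1 x xl px; have [_ _ <-] := H1 y yl py; rewrite E.
- exact: filter_uniq.
move=> y; apply/mapP/idP.
- move=> [x]; rewrite mem_filter => /andP[px xl] ->.
  by have [a b _] := H1 x xl px; rewrite mem_filter b a.
- rewrite mem_filter => /andP[qy yl].
  have [a b c] := H2 y yl qy; exists (g y) => //; by rewrite mem_filter a b.
Qed.

Lemma mem_seqs_upto (X : eqType) (A : seq X) n s :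
  (s \in seqs_upto A n) = (size s <= n) && all (mem A) s.
Proof.
elim: n s => [|n IH] [|x t] //=.
rewrite inE /=; apply/allpairsP/idP.
- move=> [[y u]] /= [yA uS [-> ->]]; move: uS; rewrite IH /= => /andP[a b].
  by rewrite ltnS a yA b.
- move=> /andP[st /andP[xA tA]]; exists (x, t); split => //; by rewrite IH -ltnS st.
Qed.

Lemma uniq_seqs_upto (X : eqType) (A : seq X) n : uniq A -> uniq (seqs_upto A n).
Proof.
move=> uA; elim: n => [|n IH] //=; apply/andP; split.
- by apply/negP => /allpairsP [[y u]] /= [_ _].
- apply: allpairs_uniq => // [[a b]] [c d] _ _ /= [-> ->] //.
Qed.

Lemma size_le_sumn s : all (fun x => 0 < x) s -> size s <= sumn s.
Proof. elim: s => //= x t IH /andP[xp /IH]; lia. Qed.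

Lemma mem_le_sumn s x : x \in s -> x <= sumn s.
Proof. elim: s => //= y t IH; rewrite inE => /orP[/eqP->|/IH]; lia. Qed.

Lemma mem_ncopy_parts m v i : ((v, i) \in ncopy_parts m) = (1 <= v <= m) && (1 <= i <= v).
Proof.
apply/allpairsPdep/idP.
- move=> [a [b [aI bI [-> ->]]]]; move: aI bI; rewrite !mem_iota; lia.
- move=> H; exists v, i; rewrite !mem_iota; split => //; lia.
Qed.

Lemma uniq_ncopy_parts m : uniq (ncopy_parts m).
Proof.
apply: allpairs_uniq_dep; first exact: iota_uniq.
- move=> x _; exact: iota_uniq.
- move=> [a b] [c d] _ _ /= [-> ->] //.
Qed.

Lemma part_mem m s : is_partition m s -> s \in seqs_upto (iota 1 m) m.
Proof.
move=> /and3P[pos _ /eqP sm]; rewrite mem_seqs_upto.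
apply/andP; split; first by rewrite -sm size_le_sumn.
apply/allP => x xs; rewrite /= mem_iota; have := (elimT allP pos) x xs.
have := mem_le_sumn _ _ xs; lia.
Qed.

Lemma ncopy_mem m s : is_ncopy_partition m s -> s \in seqs_upto (ncopy_parts m) m.
Proof.
move=> /and3P[pos _ /eqP sm]; rewrite mem_seqs_upto.
have pos' : all (fun x => 0 < x) (map fst s).
  rewrite all_map; apply/allP => a /(allP pos); rewrite /ncopy_part /=; lia.
apply/andP; split; first by rewrite -(size_map fst) -sm size_le_sumn.
apply/allP => [[v i]] xs; rewrite /= mem_ncopy_parts.
have := (elimT allP pos) _ xs; rewrite /ncopy_part /=.
have := mem_le_sumn _ _ (map_f fst xs); rewrite sm /=; lia.
Qed.

Definition gtr := fun a b : nat => b < a.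

Lemma gtr_trans : transitive gtr.
Proof. move=> a b c; rewrite /gtr; lia. Qed.
Lemma geq_trans : transitive geq.
Proof. move=> a b c /=; lia. Qed.

Lemma path_dbl x t : path gtr x t -> path geq x (dbl t).
Proof.
elim: t x => //= y t IH x /andP[xy pt] /=.
rewrite leqnn /= IH // andbT; move: xy; rewrite /gtr; lia.
Qed.

Lemma foldr_max_le x t : all (fun y => y <= x) t -> foldr maxn 0 t <= x.
Proof. elim: t => //= y t IH /andP[a /IH b]; by rewrite geq_max a b. Qed.

Lemma D1 {t} : sorted geq t -> all (fun y => count_mem y t == 2) t ->
  t = dbl (undbl t) /\ sorted gtr (undbl t).
Proof.
move: {2}(size t) (leqnn (size t)) => n; elim: n t => [|n IH] [|y t1] //=.
move=> sz st /andP[/eqP cy call].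
case: t1 sz st cy call => [|z t2] sz st cy call; first by move: cy; rewrite /= eqxx.
move: st => /= /andP[zy pz].
have yin : y \in z :: t2.
  have : 0 < count_mem y (z :: t2) by move: cy => /=; rewrite eqxx; lia.
  by rewrite -has_count has_pred1.
have yz : y <= z.
  move: yin; rewrite inE => /orP[/eqP-> //|yt2].
  by move/(order_path_min geq_trans)/allP: pz => /(_ _ yt2) /=; lia.
have ezy : z = y by apply/eqP; rewrite eqn_leq zy yz.
subst z.
have c2 : count_mem y t2 = 0 by move: cy => /=; rewrite eqxx; lia.
have lt2 : forall w, w \in t2 -> w < y.
  move=> w wt; move/(order_path_min geq_trans)/allP: pz => /(_ _ wt) /= wy.
  have : w != y by apply/eqP => E; subst w; move/count_memPn: c2; rewrite wt.
  lia.
have call2 : all (fun w => count_mem w t2 == 2) t2.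
  apply/allP => w wt; move/allP: call => /(_ w); rewrite !inE wt orbT => /(_ isT).
  have := lt2 w wt; rewrite /=; case: (y =P w) => [->|_]; first lia.
  by rewrite !add0n.
have [E S] := IH t2 ltac:(by move: sz => /=; lia) (path_sorted pz) call2.
split; first by rewrite /= -E.
rewrite /= (path_sortedE gtr_trans) S andbT; apply/allP => w.
rewrite -mem_dbl -E /gtr => /lt2 //.
Qed.

Definition Pgood (P : seq nat) := [&& sorted ltn P, all (fun x => 0 < x) P & P != [::]].

Lemma A2' D : sorted gtr D -> all (fun x => 0 < x) D -> D != [::] ->
  is_partition (sumn (m1of D)) (m1of D) && M1_cond (m1of D) /\ unm1 (m1of D) = D.
Proof.
move=> sD pD nD.
have uP : uniq D by apply: (sorted_uniq gtr_trans) => // a; rewrite /gtr ltnn.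
case: D sD pD nD uP => [|x t] // sD /= /andP[xp tp] _ uP.
split; last by rewrite undbl_dbl.
have at_ : all (gtr x) t by apply: (order_path_min gtr_trans).
rewrite /is_partition /M1_cond /= xp andTb eqxx andbT.
have -> : maxn x (foldr maxn 0 (dbl t)) = x.
  apply/maxn_idPl; apply: foldr_max_le; apply/allP => y; rewrite mem_dbl => yt.
  by move/allP: at_ => /(_ _ yt); rewrite /gtr; lia.
rewrite path_dbl // eqxx count_dbl.
have -> : count_mem x t = 0.
  apply/count_memPn; apply/negP => xt; move/allP: at_ => /(_ _ xt); rewrite /gtr ltnn //.
rewrite andbT /=; apply/andP; split.
- apply/allP => y; rewrite mem_dbl => yt; move/allP: tp => /(_ _ yt); lia.
apply/allP => y; rewrite mem_dbl => yt; apply/implyP => yx.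
move: uP => /= /andP[_ ut]; rewrite count_dbl (count_uniq_mem _ ut) yt.
by move: yx; case: (x =P y) => // ->; rewrite eqxx.
Qed.

Lemma A2 P : Pgood P ->
  is_partition (sumn (m1of (rev P))) (m1of (rev P)) && M1_cond (m1of (rev P))
  /\ rev (unm1 (m1of (rev P))) = P.
Proof.
move=> /and3P[sP pP nP].
have [H1 H2] := A2' (rev P) ltac:(by rewrite rev_sorted) ltac:(by rewrite all_rev)
  ltac:(by rewrite -size_eq0 size_rev size_eq0).
by rewrite H2 revK.
Qed.

Lemma A1 m s : 0 < m -> is_partition m s && M1_cond s ->
  Pgood (rev (unm1 s)) /\ m1of (rev (rev (unm1 s))) = s /\ sumn s = m.
Proof.
move=> m0 /andP[/and3P[pos ss /eqP sm] /andP[/eqP c1 call]].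
rewrite revK; suff : Pgood (rev (unm1 s)) /\ m1of (unm1 s) = s by case.
case: s sm pos ss c1 call => [|x t]; first by move=> sm; move: m0; rewrite -sm.
move=> _ /= /andP[xp tp] pt.
have tle : all (fun y => y <= x) t.
  by apply/allP => y yt; move/(order_path_min geq_trans)/allP: pt => /(_ _ yt).
have -> : maxn x (foldr maxn 0 t) = x by apply/maxn_idPl; apply: foldr_max_le.
rewrite eqxx add1n => -[c0] /andP[_ call].
have tlt : forall y, y \in t -> y < x.
  move=> y yt; have : y != x by apply/eqP => E; subst y; move/count_memPn: c0; rewrite yt.
  by move/allP: tle => /(_ _ yt); lia.
have call2 : all (fun y => count_mem y t == 2) t.
  apply/allP => y yt; have lt := tlt y yt; have := (elimT allP call) y yt.
  by rewrite /= (ltn_eqF lt) (gtn_eqF lt) /= add0n.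
have [E S] := D1 (path_sorted pt) call2.
have gD : sorted gtr (x :: undbl t).
  rewrite /= (path_sortedE gtr_trans) S andbT; apply/allP => w.
  by rewrite -mem_dbl -E /gtr => /tlt.
split.
- rewrite /Pgood rev_sorted gD all_rev /= xp /= -size_eq0 size_rev /= andbT.
  apply/allP => w; rewrite -mem_dbl -E => /(elimT allP tp) //.
- by rewrite /= -E.
Qed.

Definition RR := fun a b : nat * nat => wdiff b a == 0%R.

Lemma hh_eq q p : q < p -> hh (q + p, p - q) = p.
Proof.
move=> qp; rewrite /hh /=.
have -> : q + p + (p - q) = p.*2 by rewrite -addnn; lia.
exact: half_double.
Qed.

Lemma B1g s : forall q p, q < p -> all ncopy_part s -> path RR (q + p, p - q) s ->
  m2aux p (map hh s) = s /\ path ltn p (map hh s).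
Proof.
elim: s => [|[v i] s IH] q p qp //= /andP[nc ncs] /andP[r ps].
move: r nc; rewrite /RR wdiffE /ncopy_part /= => /eqP ev /andP[i1 _].
rewrite ev; rewrite ev in ps.
have ep : q + p + i + (p - q) = p + (p + i) by lia.
rewrite ep; rewrite ep in ps.
have -> : hh (p + (p + i), i) = p + i.
  rewrite /hh /= (_ : p + (p + i) + i = (p + i).*2) ?half_double //.
  rewrite -addnn; lia.
have [E P'] := IH p (p + i) ltac:(lia) ncs ltac:(by rewrite (_ : p + i - p = i) //; lia).
rewrite E P' andbT (_ : p + i - p = i); last lia.
split => //; lia.
Qed.

Lemma B1 m s : is_ncopy_partition m s && M2_cond s ->
  Pgood (map hh s) /\ m2of (map hh s) = s /\ sumn (map fst s) = m.
Proof.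
move=> /andP[/and3P[nc _ /eqP sm] /andP[sR]].
case: s nc sm sR => [|[v i] s] //= /andP[ncv ncs] sm sR /eqP ev; subst i.
move: ncv; rewrite /ncopy_part /= => /andP[v1 _].
have [E P'] := @B1g s 0 v v1 ncs ltac:(by rewrite add0n subn0).
have -> : hh (v, v) = v by rewrite /hh addnn half_double.
split; last by rewrite /m2of /= E add0n subn0.
have : path ltn 0 (v :: map hh s) by rewrite /= v1.
rewrite (path_sortedE ltn_trans) => /andP[a b].
by rewrite /Pgood b a.
Qed.

Lemma B2g P : forall q q', q' < q -> path ltn q P ->
  [/\ path lexle (q' + q, q - q') (m2aux q P), path RR (q' + q, q - q') (m2aux q P),
      all ncopy_part (m2aux q P) & map hh (m2aux q P) = P].
Proof.
elim: P => [|p P IH] q q' qq //= /andP[qp pP].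
have [a b c d] := IH p q qp pP.
rewrite a b c d hh_eq // /lexle /RR wdiffE /ncopy_part /= !andbT.
split => //; [apply/orP; left; lia | apply/eqP; lia | apply/andP; split; lia].
Qed.


Lemma B2 P : Pgood P ->
  is_ncopy_partition (sumn (map fst (m2of P))) (m2of P) && M2_cond (m2of P)
  /\ map hh (m2of P) = P.
Proof.
move=> /and3P[sP pP nP].
case: P sP pP nP => [|p P] // sP /= /andP[p1 pP] _.
have [a b c d] := @B2g P p 0 p1 sP.
rewrite /m2of /= add0n subn0 in a b c d *.
have hp : hh (p, p) = p by rewrite /hh addnn half_double.
rewrite hp d; split => //.
rewrite /is_ncopy_partition /M2_cond /= a b c eqxx /ncopy_part /= p1 leqnn.
by rewrite eqxx.
Qed.

Lemma W_aux P : forall q, sumn (map fst (m2aux q P)) + last q P = q + (sumn P).*2.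
Proof.
elim: P => [|p P IH] q /=; first by rewrite addn0.
have := IH p; rewrite -!addnn; lia.
Qed.

Lemma W P : sumn (m1of (rev P)) = sumn (map fst (m2of P)).
Proof.
case/lastP: P => [|P x] //.
have := W_aux (rcons P x) 0; rewrite last_rcons rev_rcons /= sumn_dbl sumn_rev.
rewrite sumn_rcons /m2of -!addnn; lia.
Qed.

Theorem corollary28 (m : nat) : 0 < m -> M1 m = M2 m.
Proof.
move=> m0; rewrite /M1 /M2.
apply: (@count_bij _ _ _ _ _ _ (fun s => m2of (rev (unm1 s))) (fun s => m1of (rev (map hh s)))).
- apply: uniq_seqs_upto; exact: iota_uniq.
- apply: uniq_seqs_upto; exact: uniq_ncopy_parts.
- move=> s _ ps; have [G [E S]] := A1 _ _ m0 ps.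
  rewrite revK in E.
  have [Q H] := B2 _ G; rewrite -W revK E S in Q.
  split => //; last by rewrite H revK E.
  by apply: ncopy_mem; case/andP: Q.
- move=> y _ qy; have [G [E S]] := B1 _ _ qy.
  have [Q H] := A2 _ G; rewrite W E S in Q.
  split => //; last by rewrite H E.
  by apply: part_mem; case/andP: Q.
Qed.
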